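(* Let $\gamma:\mathbb{S}^3\to\mathrm{SO}(3)$ be the standard map from unit quaternions $\mathbf{q}=(q_0,q_1,q_2,q_3)$ to rotation matrices, $$\gamma(\mathbf{q})=\begin{pmatrix}1-2q_2^2-2q_3^2 & 2q_1q_2-2q_0q_3 & 2q_1q_3+2q_0q_2\\ 2q_1q_2+2q_0q_3 & 1-2q_1^2-2q_3^2 & 2q_2q_3-2q_0q_1\\ 2q_1q_3-2q_0q_2 & 2q_2q_3+2q_0q_1 & 1-2q_1^2-2q_2^2\end{pmatrix}.$$ If $\mathbf{R}\in\mathrm{SO}(3)$ follows the Rotation Laplace distribution $\mathcal{RL}(\mathbf{A})$ for some $\mathbf{A}\in\mathbb{R}^{3\times3}$, then $\mathbf{q}=\gamma^{-1}(\mathbf{R})\in\mathbb{S}^3$ follows a Quaternion Laplace distribution $\mathcal{QL}(\mathbf{M},\mathbf{Z})$ for some $\mathbf{M}\in\mathrm{O}(4)$ and some $\mathbf{Z}=\operatorname{diag}(0,z_1,z_2,z_3)$.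
   Context: Rotation Laplace distribution $\mathcal{RL}(\mathbf{A})$: for $\mathbf{A}\in\mathbb{R}^{3\times3}$ with proper SVD $\mathbf{A}=\mathbf{U}\mathbf{S}\mathbf{V}^T$, density with respect to the Haar measure on $\mathrm{SO}(3)$ normalized to total mass $1$ given by $p(\mathbf{R};\mathbf{A})=\frac{1}{F(\mathbf{A})}\exp(-\sqrt{\operatorname{tr}(\mathbf{S}-\mathbf{A}^T\mathbf{R})})/\sqrt{\operatorname{tr}(\mathbf{S}-\mathbf{A}^T\mathbf{R})}$. Proper SVD: from an ordinary SVD $\mathbf{A}=\mathbf{U}'\operatorname{diag}(s_1',s_2',s_3')(\mathbf{V}')^T$, set $\mathbf{U}=\mathbf{U}'\operatorname{diag}(1,1,\det\mathbf{U}')$, $\mathbf{V}=\mathbf{V}'\operatorname{diag}(1,1,\det\mathbf{V}')$, $\mathbf{S}=\operatorname{diag}(s_1',s_2',\det(\mathbf{U}'\mathbf{V}')s_3')$. Quaternion Laplace distribution $\mathcal{QL}(\mathbf{M},\mathbf{Z})$ with $\mathbf{M}\in\mathrm{O}(4)$, $\mathbf{Z}=\operatorname{diag}(0,z_1,z_2,z_3)$: density on $\mathbb{S}^3$ (w.r.t. surface measure) proportional to $\exp(-\sqrt{-\mathbf{q}^T\mathbf{M}\mathbf{Z}\mathbf{M}^T\mathbf{q}})/\sqrt{-\mathbf{q}^T\mathbf{M}\mathbf{Z}\mathbf{M}^T\mathbf{q}}$. Since $\gamma(\mathbf{q})=\gamma(-\mathbf{q})$, $\gamma^{-1}(\mathbf{R})$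 denotes a preimage quaternion (the distributions involved are antipodally symmetric). *)

(* Defs.v *)
From HB Require Import structures.
From mathcomp Require Import all_boot all_order all_algebra.
From mathcomp Require Import all_classical all_reals all_analysis.
Unset Printing Implicit Defensive.
Import Order.TTheory GRing.Theory Num.Theory.
Local Open Scope ring_scope.
Local Open Scope classical_set_scope.

Definition Mat3 (R : realType) :=
  g_sigma_algebraType (open : set_system 'M[R^o]_(3,3)).
Definition Vec4 (R : realType) :=
  g_sigma_algebraType (open : set_system 'cV[R^o]_4).

Definition SO3 (R : realType) : set (Mat3 R) :=
  [set X | X^T *m X = 1%:M /\ \det X = 1].
Definition orthogonal4 {R : realType} (M : 'M[R]_4) : Prop := M^T *m M = 1%:M.
Definition S3 (R : realType) : set (Vec4 R) :=
  [set q | \sum_(i < 4) q i 0 ^+ 2 = 1].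

Definition qc {R : realType} (q : 'cV[R]_4) (k : nat) : R := q (inord k) 0.

Definition gamma {R : realType} (q : 'cV[R]_4) : 'M[R]_(3,3) :=
  let q0 := qc q 0 in let q1 := qc q 1 in
  let q2 := qc q 2 in let q3 := qc q 3 in
  \matrix_(i < 3, j < 3)
   match val i, val j with
   | 0, 0 => 1 - 2 * q2 ^+ 2 - 2 * q3 ^+ 2
   | 0, 1 => 2 * q1 * q2 - 2 * q0 * q3
   | 0, _ => 2 * q1 * q3 + 2 * q0 * q2
   | 1, 0 => 2 * q1 * q2 + 2 * q0 * q3
   | 1, 1 => 1 - 2 * q1 ^+ 2 - 2 * q3 ^+ 2
   | 1, _ => 2 * q2 * q3 - 2 * q0 * q1
   | _, 0 => 2 * q1 * q3 - 2 * q0 * q2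
   | _, 1 => 2 * q2 * q3 + 2 * q0 * q1
   | _, _ => 1 - 2 * q1 ^+ 2 - 2 * q2 ^+ 2
   end.

Definition is_svd {R : realType} (A U' V' : 'M[R]_3) (s : 'rV[R]_3) : Prop :=
  U'^T *m U' = 1%:M /\ V'^T *m V' = 1%:M /\
  s 0 (inord 0) >= s 0 (inord 1) /\ s 0 (inord 1) >= s 0 (inord 2) /\
  s 0 (inord 2) >= 0 /\
  A = U' *m diag_mx s *m V'^T.

(* The diagonal matrix S of the proper SVD built from an ordinary SVD:
   S = diag(s1', s2', det(U'V') s3'). *)
Definition proper_S {R : realType} (U' V' : 'M[R]_3) (s : 'rV[R]_3) : 'M[R]_3 :=
  diag_mx (\row_(i < 3) (if val i == 2%N then \det (U' *m V') * s 0 i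
                         else s 0 i)).

Definition lap_kernel {R : realType} (x : R) : R :=
  expR (- Num.sqrt x) / Num.sqrt x.

(* Unnormalized RL(A) density (w.r.t. Haar measure) at a rotation X. *)
Definition RL_dens {R : realType} (A S : 'M[R]_3) (X : 'M[R]_3) : R :=
  lap_kernel (\tr (S - A^T *m X)).

(* Unnormalized QL(M,Z) density (w.r.t. surface measure) at q. *)
Definition QL_dens {R : realType} (M Z : 'M[R]_4) (q : 'cV[R]_4) : R :=
  lap_kernel (- (q^T *m M *m Z *m M^T *m q) 0 0).

Definition diagZ {R : realType} (z1 z2 z3 : R) : 'M[R]_4 :=
  diag_mx (\row_(i < 4) match val i with
                        | 0 => 0 | 1 => z1 | 2 => z2 | _ => z3 end).

(* Normalized Haar measure on SO(3): a Borel probability measure on the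
   3x3 matrices, concentrated on SO(3), invariant under left multiplication
   by rotations (unique by uniqueness of Haar measure). *)
Definition haar_SO3 {R : realType} (nu : {measure set (Mat3 R) -> \bar R}) :=
  nu [set: Mat3 R] = 1%E /\ nu (~` SO3 R) = 0%E /\
  forall Q : 'M[R]_3, SO3 R Q ->
    forall B : set (Mat3 R), measurable B ->
      nu ((fun X : Mat3 R => (Q *m X : Mat3 R)) @^-1` B) = nu B.

(* Normalized surface measure on S^3: a Borel probability measure on R^4
   concentrated on S^3 and invariant under O(4) (unique). *)
Definition surface_S3 {R : realType} (sg : {measure set (Vec4 R) -> \bar R}) :=
  sg [set: Vec4 R] = 1%E /\ sg (~` S3 R) = 0%E /\
  forall Q : 'M[R]_4, orthogonal4 Q ->
    forall B : set (Vec4 R), measurable B ->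
      sg ((fun q : Vec4 R => (Q *m q : Vec4 R)) @^-1` B) = sg B.

(* Main.v *)
Require Import Defs.
From HB Require Import structures.
From mathcomp Require Import all_boot all_order all_algebra.
From mathcomp Require Import all_classical all_reals all_analysis.
From mathcomp Require Import ring lra measurable_realfun.
Unset Printing Implicit Defensive.
Import Order.TTheory GRing.Theory Num.Theory.
Local Open Scope ring_scope.

From mathcomp Require Import ring lra.
Section Alg.
Context {R : realType}.
Implicit Types (a b c d e f g h : R).

Definition mkq a b c d : 'cV[R]_4 :=
  \col_(i < 4) (match val i with 0 => a | 1 => b | 2 => c | _ => d end).

Lemma qc_mkq0 a b c d : qc (mkq a b c d) 0 = a.
Proof. by rewrite /qc mxE /= inordK. Qed.
Lemma qc_mkq1 a b c d : qc (mkq a b c d) 1 = b.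
Proof. by rewrite /qc mxE /= inordK. Qed.
Lemma qc_mkq2 a b c d : qc (mkq a b c d) 2 = c.
Proof. by rewrite /qc mxE /= inordK. Qed.
Lemma qc_mkq3 a b c d : qc (mkq a b c d) 3 = d.
Proof. by rewrite /qc mxE /= inordK. Qed.
Definition qcE := (qc_mkq0, qc_mkq1, qc_mkq2, qc_mkq3).

Lemma mkq_eta (q : 'cV[R]_4) : q = mkq (qc q 0) (qc q 1) (qc q 2) (qc q 3).
Proof.
apply/matrixP => i j; rewrite !mxE (ord1 j) /qc.
by case: i => -[|[|[|[|i]]]] Hi //=; congr (q _ _); apply: val_inj; rewrite /= inordK.
Qed.

Lemma sum4 (F : 'I_4 -> R) : \sum_(i < 4) F i =
  F (inord 0) + F (inord 1) + F (inord 2) + F (inord 3).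
Proof.
rewrite !big_ord_recr big_ord0 /= add0r.
by congr (_ + _ + _ + _); congr F; apply: val_inj; rewrite /= inordK.
Qed.

Definition nrm (q : 'cV[R]_4) := \sum_(i < 4) q i 0 ^+ 2.

Lemma nrm_mkq a b c d : nrm (mkq a b c d) = a^+2 + b^+2 + c^+2 + d^+2.
Proof. by rewrite /nrm sum4 !mxE /= !inordK. Qed.

Definition gh a b c d : 'M[R]_3 :=
  \matrix_(i < 3, j < 3)
   match val i, val j with
   | 0, 0 => a^+2 + b^+2 - c^+2 - d^+2
   | 0, 1 => 2 * b * c - 2 * a * d
   | 0, _ => 2 * b * d + 2 * a * c
   | 1, 0 => 2 * b * c + 2 * a * d
   | 1, 1 => a^+2 - b^+2 + c^+2 - d^+2
   | 1, _ => 2 * c * d - 2 * a * b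
   | _, 0 => 2 * b * d - 2 * a * c
   | _, 1 => 2 * c * d + 2 * a * b
   | _, _ => a^+2 - b^+2 - c^+2 + d^+2
   end.

Lemma gamma_gh a b c d : a^+2 + b^+2 + c^+2 + d^+2 = 1 ->
  gamma (mkq a b c d) = gh a b c d.
Proof.
move=> H; apply/matrixP => i j; rewrite /gamma /= !mxE !qcE.
have H' : 1 = a^+2 + b^+2 + c^+2 + d^+2 by rewrite H.
by case: i => -[|[|[|i]]] Hi //=; case: j => -[|[|[|j]]] Hj //=; lra.
Qed.

Definition qmul (p q : 'cV[R]_4) : 'cV[R]_4 :=
  let a := qc p 0 in let b := qc p 1 in let c := qc p 2 in let d := qc p 3 in
  let e := qc q 0 in let f := qc q 1 in let g := qc q 2 in let h := qc q 3 in
  mkq (a*e - b*f - c*g - d*h) (a*f + b*e + c*h - d*g)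
      (a*g - b*h + c*e + d*f) (a*h + b*g - c*f + d*e).

Definition qconj (p : 'cV[R]_4) : 'cV[R]_4 :=
  mkq (qc p 0) (- qc p 1) (- qc p 2) (- qc p 3).

Lemma mul3E (A B : 'M[R]_3) i j : (A *m B) i j =
  A i (inord 0) * B (inord 0) j + A i (inord 1) * B (inord 1) j + A i (inord 2) * B (inord 2) j.
Proof.
rewrite mxE !big_ord_recr big_ord0 /= add0r.
by congr (_ + _ + _); congr (A _ _ * B _ _); apply: val_inj; rewrite /= inordK.
Qed.

Lemma mul4E (A : 'M[R]_4) (B : 'M[R]_(4,1)) i j : (A *m B) i j =
  A i (inord 0) * B (inord 0) j + A i (inord 1) * B (inord 1) j +
  A i (inord 2) * B (inord 2) j + A i (inord 3) * B (inord 3) j.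
Proof.
rewrite mxE !big_ord_recr big_ord0 /= add0r.
by congr (_ + _ + _ + _); congr (A _ _ * B _ _); apply: val_inj; rewrite /= inordK.
Qed.

Lemma mul44E (A B : 'M[R]_4) i j : (A *m B) i j =
  A i (inord 0) * B (inord 0) j + A i (inord 1) * B (inord 1) j +
  A i (inord 2) * B (inord 2) j + A i (inord 3) * B (inord 3) j.
Proof.
rewrite mxE !big_ord_recr big_ord0 /= add0r.
by congr (_ + _ + _ + _); congr (A _ _ * B _ _); apply: val_inj; rewrite /= inordK.
Qed.

Lemma gh_mul a b c d e f g h :
  gh a b c d *m gh e f g h =
  gh (a*e - b*f - c*g - d*h) (a*f + b*e + c*h - d*g)
     (a*g - b*h + c*e + d*f) (a*h + b*g - c*f + d*e).
Proof.
apply/matrixP => i j; rewrite mul3E !mxE /= !inordK //.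
by case: i => -[|[|[|i]]] Hi //=; case: j => -[|[|[|j]]] Hj //=; ring.
Qed.

Lemma gh_tr a b c d : (gh a b c d)^T = gh a (-b) (-c) (-d).
Proof.
apply/matrixP => i j; rewrite !mxE.
by case: i => -[|[|[|i]]] Hi //=; case: j => -[|[|[|j]]] Hj //=; ring.
Qed.

Lemma qmul_mkq a b c d e f g h : qmul (mkq a b c d) (mkq e f g h) =
  mkq (a*e - b*f - c*g - d*h) (a*f + b*e + c*h - d*g)
      (a*g - b*h + c*e + d*f) (a*h + b*g - c*f + d*e).
Proof. by rewrite /qmul !qcE. Qed.

Lemma qconj_mkq a b c d : qconj (mkq a b c d) = mkq a (-b) (-c) (-d).
Proof. by rewrite /qconj !qcE. Qed.

Lemma nrm_qmul p q : nrm (qmul p q) = nrm p * nrm q.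
Proof.
rewrite (mkq_eta p) (mkq_eta q) qmul_mkq !nrm_mkq; ring.
Qed.

Lemma nrm_qconj p : nrm (qconj p) = nrm p.
Proof. rewrite (mkq_eta p) qconj_mkq !nrm_mkq; ring. Qed.

Lemma gamma_mul p q : nrm p = 1 -> nrm q = 1 ->
  gamma (qmul p q) = gamma p *m gamma q.
Proof.
move=> Hp Hq; have Hpq : nrm (qmul p q) = 1 by rewrite nrm_qmul Hp Hq mulr1.
move: Hp Hq Hpq; rewrite (mkq_eta p) (mkq_eta q) qmul_mkq !nrm_mkq => Hp Hq Hpq.
by rewrite !gamma_gh // gh_mul.
Qed.

Lemma gamma_conj p : nrm p = 1 -> gamma (qconj p) = (gamma p)^T.
Proof.
move=> Hp; have Hc : nrm (qconj p) = 1 by rewrite nrm_qconj.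
move: Hp Hc; rewrite (mkq_eta p) qconj_mkq !nrm_mkq => Hp Hc.
by rewrite !gamma_gh // gh_tr.
Qed.

Lemma det3 (A : 'M[R]_3) : \det A =
  A (inord 0) (inord 0) * A (inord 1) (inord 1) * A (inord 2) (inord 2)
  + A (inord 0) (inord 1) * A (inord 1) (inord 2) * A (inord 2) (inord 0)
  + A (inord 0) (inord 2) * A (inord 1) (inord 0) * A (inord 2) (inord 1)
  - A (inord 0) (inord 2) * A (inord 1) (inord 1) * A (inord 2) (inord 0)
  - A (inord 0) (inord 1) * A (inord 1) (inord 0) * A (inord 2) (inord 2)
  - A (inord 0) (inord 0) * A (inord 1) (inord 2) * A (inord 2) (inord 1).
Proof.
have {1}-> : A = \matrix_(i < 3, j < 3) A (inord i) (inord j).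
  by apply/matrixP => i j; rewrite mxE !inord_val.
rewrite (expand_det_row _ ord0) !big_ord_recr big_ord0 /= add0r.
rewrite /cofactor !(expand_det_row _ ord0) !big_ord_recr big_ord0 /= !add0r.
rewrite /cofactor !det_mx11 !mxE /= !big_ord0 !add0r /bump /=.
ring.
Qed.

Lemma mx3_ext (A B : 'M[R]_3) :
  (forall i j, (i < 3)%N -> (j < 3)%N -> A (inord i) (inord j) = B (inord i) (inord j)) -> A = B.
Proof.
move=> H; apply/matrixP => i j; rewrite -(inord_val i) -(inord_val j); exact: H.
Qed.

Lemma mx4_ext (A B : 'M[R]_4) :
  (forall i j, (i < 4)%N -> (j < 4)%N -> A (inord i) (inord j) = B (inord i) (inord j)) -> A = B.
Proof.
move=> H; apply/matrixP => i j; rewrite -(inord_val i) -(inord_val j); exact: H.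
Qed.

Lemma id3E i j : (i < 3)%N -> (j < 3)%N ->
  (1%:M : 'M[R]_3) (inord i) (inord j) = (i == j)%:R.
Proof. by move=> Hi Hj; rewrite mxE -val_eqE /= !inordK. Qed.

Lemma id4E i j : (i < 4)%N -> (j < 4)%N ->
  (1%:M : 'M[R]_4) (inord i) (inord j) = (i == j)%:R.
Proof. by move=> Hi Hj; rewrite mxE -val_eqE /= !inordK. Qed.

Lemma gammaE (q : 'cV[R]_4) i j : (i < 3)%N -> (j < 3)%N ->
  gamma q (inord i) (inord j) =
   match i, j with
   | 0, 0 => 1 - 2 * qc q 2 ^+ 2 - 2 * qc q 3 ^+ 2
   | 0, 1 => 2 * qc q 1 * qc q 2 - 2 * qc q 0 * qc q 3
   | 0, _ => 2 * qc q 1 * qc q 3 + 2 * qc q 0 * qc q 2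
   | 1, 0 => 2 * qc q 1 * qc q 2 + 2 * qc q 0 * qc q 3
   | 1, 1 => 1 - 2 * qc q 1 ^+ 2 - 2 * qc q 3 ^+ 2
   | 1, _ => 2 * qc q 2 * qc q 3 - 2 * qc q 0 * qc q 1
   | _, 0 => 2 * qc q 1 * qc q 3 - 2 * qc q 0 * qc q 2
   | _, 1 => 2 * qc q 2 * qc q 3 + 2 * qc q 0 * qc q 1
   | _, _ => 1 - 2 * qc q 1 ^+ 2 - 2 * qc q 2 ^+ 2
   end.
Proof. by move=> Hi Hj; rewrite /gamma /= mxE /= !inordK. Qed.

Lemma ghTgh a b c d : (gh a b c d)^T *m gh a b c d =
  (a^+2 + b^+2 + c^+2 + d^+2)^+2 *: 1%:M.
Proof.
apply/matrixP => i j; rewrite mul3E !mxE /= !inordK //.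
by case: i => -[|[|[|i]]] Hi //=; case: j => -[|[|[|j]]] Hj //=; ring.
Qed.

Lemma det_gh a b c d : \det (gh a b c d) = (a^+2 + b^+2 + c^+2 + d^+2)^+3.
Proof. by rewrite det3 !mxE /= !inordK //; ring. Qed.

Lemma gammaTgamma q : nrm q = 1 -> (gamma q)^T *m gamma q = 1%:M.
Proof.
rewrite (mkq_eta q) nrm_mkq => H; rewrite gamma_gh // ghTgh H expr1n scale1r //.
Qed.

Lemma det_gamma q : nrm q = 1 -> \det (gamma q) = 1.
Proof. rewrite (mkq_eta q) nrm_mkq => H; by rewrite gamma_gh // det_gh H expr1n. Qed.

Lemma gamma_gammaT q : nrm q = 1 -> gamma q *m (gamma q)^T = 1%:M.
Proof. by move=> H; apply: mulmx1C; exact: gammaTgamma. Qed.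

Definition Rmat (r : 'cV[R]_4) : 'M[R]_4 :=
  let e := qc r 0 in let f := qc r 1 in let g := qc r 2 in let h := qc r 3 in
  \matrix_(i < 4, j < 4) match val i, val j with
  | 0,0 => e | 0,1 => -f | 0,2 => -g | 0,_ => -h
  | 1,0 => f | 1,1 => e | 1,2 => h | 1,_ => -g
  | 2,0 => g | 2,1 => -h | 2,2 => e | 2,_ => f
  | _,0 => h | _,1 => g | _,2 => -f | _,_ => e end.

Definition Lmat (l : 'cV[R]_4) : 'M[R]_4 :=
  let e := qc l 0 in let f := qc l 1 in let g := qc l 2 in let h := qc l 3 in
  \matrix_(i < 4, j < 4) match val i, val j with
  | 0,0 => e | 0,1 => -f | 0,2 => -g | 0,_ => -h
  | 1,0 => f | 1,1 => e | 1,2 => -h | 1,_ => g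
  | 2,0 => g | 2,1 => h | 2,2 => e | 2,_ => -f
  | _,0 => h | _,1 => -g | _,2 => f | _,_ => e end.

Lemma Rmat_mul p r : Rmat r *m p = qmul p r.
Proof.
rewrite {1}(mkq_eta p) {1}(mkq_eta r) [in RHS](mkq_eta p) [in RHS](mkq_eta r) qmul_mkq.
apply/matrixP => i j; rewrite mul4E !mxE /= !inordK // !qcE.
by case: i => -[|[|[|[|i]]]] Hi //=; ring.
Qed.

Lemma Lmat_mul l q : Lmat l *m q = qmul l q.
Proof.
rewrite {1}(mkq_eta q) {1}(mkq_eta l) [in RHS](mkq_eta q) [in RHS](mkq_eta l) qmul_mkq.
apply/matrixP => i j; rewrite mul4E !mxE /= !inordK // !qcE.
by case: i => -[|[|[|[|i]]]] Hi //=; ring.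
Qed.

Lemma RmatT r : (Rmat r)^T *m Rmat r = nrm r *: 1%:M.
Proof.
rewrite (mkq_eta r) nrm_mkq.
apply/matrixP => i j; rewrite mul44E !mxE /= !inordK // !qcE.
by case: i => -[|[|[|[|i]]]] Hi //=; case: j => -[|[|[|[|j]]]] Hj //=; ring.
Qed.

Lemma LmatT r : (Lmat r)^T *m Lmat r = nrm r *: 1%:M.
Proof.
rewrite (mkq_eta r) nrm_mkq.
apply/matrixP => i j; rewrite mul44E !mxE /= !inordK // !qcE.
by case: i => -[|[|[|[|i]]]] Hi //=; case: j => -[|[|[|[|j]]]] Hj //=; ring.
Qed.

Lemma mxentry (A B : 'M[R]_3) i j : A = B -> A (inord i) (inord j) = B (inord i) (inord j).
Proof. by move->. Qed.

Lemma sqrt_pos_sq (x : R) : 0 < x -> Num.sqrt x != 0 /\ Num.sqrt x ^+ 2 = x.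
Proof.
move=> x0; split; first by rewrite gt_eqF // sqrtr_gt0.
by rewrite sqr_sqrtr // ltW.
Qed.

Lemma col_quat (x y z : R) : x^+2 + y^+2 + z^+2 = 1 ->
  exists w, nrm w = 1 /\ gamma w (inord 0) (inord 0) = x /\
    gamma w (inord 1) (inord 0) = y /\ gamma w (inord 2) (inord 0) = z.
Proof.
move=> H.
have [x1|x1] := eqVneq (1 + x) 0.
  have xe : x = -1 by lra.
  have yz : y^+2 + z^+2 = 0 by rewrite xe in H; lra.
  have y0 : y = 0.
    by apply/eqP; rewrite -sqrf_eq0 eq_le sqr_ge0 andbT; nra.
  have z0 : z = 0.
    by apply/eqP; rewrite -sqrf_eq0 eq_le sqr_ge0 andbT; nra.
  exists (mkq 0 0 1 0); rewrite nrm_mkq !gammaE // !qcE xe y0 z0.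
  split; first by ring. by split; [ring | split; ring].
have xpos : 0 < 2 * (1 + x).
  have : -1 <= x by nra.
  by move: x1; rewrite lt_neqAle => x1 Hx; apply/andP; split; [lra| lra].
have [sq0 sq2] := sqrt_pos_sq _ xpos.
set sq := Num.sqrt _ in sq0 sq2.
have x1' : 1 + x != 0 by [].
have Hy2 : y^+2 = 1 - x^+2 - z^+2 by lra.
exists (mkq (sq / 2) 0 (- z / sq) (y / sq)); rewrite nrm_mkq !gammaE // !qcE.
split.
  rewrite !expr_div_n sq2 Hy2; field. by rewrite x1'.
split.
  rewrite !expr_div_n sq2 Hy2; field. by rewrite x1'.
split; field; by rewrite sq0.
Qed.

Lemma rot_quat (c s : R) : c^+2 + s^+2 = 1 ->
  exists w, nrm w = 1 /\ gamma w = \matrix_(i < 3, j < 3)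
    match val i, val j with 0, 0 => 1 | 1, 1 => c | 1, 2 => - s
    | 2, 1 => s | 2, 2 => c | _, _ => 0 end.
Proof.
move=> H.
have [c1|c1] := eqVneq (1 + c) 0.
  have ce : c = -1 by lra.
  have s0 : s = 0.
    by apply/eqP; rewrite -sqrf_eq0 eq_le sqr_ge0 andbT; rewrite ce in H; nra.
  exists (mkq 0 1 0 0); rewrite nrm_mkq; split; first by ring.
  apply: mx3_ext => i j Hi Hj; rewrite gammaE // mxE /= !inordK // !qcE ce s0.
  by case: i Hi => [|[|[|i]]] // _; case: j Hj => [|[|[|j]]] // _; ring.
have cpos : 0 < 2 * (1 + c).
  have : -1 <= c by nra.
  by move: c1; rewrite lt_neqAle => c1 Hc; apply/andP; split; [lra| lra].
have [sq0 sq2] := sqrt_pos_sq _ cpos.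
set sq := Num.sqrt _ in sq0 sq2.
have c1' : 1 + c != 0 by [].
have Hs2 : s^+2 = 1 - c^+2 by lra.
exists (mkq (sq / 2) (s / sq) 0 0); rewrite nrm_mkq.
split.
  rewrite !expr_div_n sq2 Hs2; field. by rewrite c1'.
apply: mx3_ext => i j Hi Hj; rewrite gammaE // mxE /= !inordK // !qcE.
case: i Hi => [|[|[|i]]] // _; case: j Hj => [|[|[|j]]] // _ /=; try ring;
  rewrite ?expr_div_n ?sq2 ?Hs2; field; by rewrite ?sq0 ?c1'.
Qed.

Lemma id3E' i j : (i < 3)%N -> (j < 3)%N ->
  (1%:M : 'M[R]_3) (inord i) (inord j) = if i == j then 1 else 0.
Proof. by move=> Hi Hj; rewrite id3E //; case: eqP. Qed.

Lemma sq0_eq0 (x y : R) : x^+2 + y^+2 = 0 -> x = 0.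
Proof. by move=> H; apply/eqP; rewrite -sqrf_eq0 eq_le sqr_ge0 andbT; nra. Qed.

Lemma gamma_surj (U : 'M[R]_3) : U^T *m U = 1%:M -> \det U = 1 ->
  exists u, nrm u = 1 /\ gamma u = U.
Proof.
move=> HU HdU.
have Hcol : U (inord 0) (inord 0) ^+ 2 + U (inord 1) (inord 0) ^+2 + U (inord 2) (inord 0) ^+ 2 = 1.
  by have := mxentry _ _ 0 0 HU; rewrite id3E' // mul3E !mxE /= => H; lra.
have [w [Hw [E0 [E1 E2]]]] := col_quat _ _ _ Hcol.
have [G HGdef] : {G | G = gamma w} by exists (gamma w).
have HG : G^T *m G = 1%:M by rewrite HGdef gammaTgamma.
have HG' : G *m G^T = 1%:M by rewrite HGdef gamma_gammaT.
have [Y HYdef] : {Y | Y = G^T *m U} by exists (G^T *m U).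
have HY : Y^T *m Y = 1%:M.
  by rewrite HYdef trmx_mul trmxK mulmxA -[U^T *m G *m G^T]mulmxA HG' mulmx1 HU.
have HY' : Y *m Y^T = 1%:M by apply: mulmx1C.
have HdY : \det Y = 1.
  by rewrite HYdef det_mulmx det_tr HGdef det_gamma // HdU mulr1.
rewrite -HGdef in E0 E1 E2.
have Ycol i : (i < 3)%N -> Y (inord i) (inord 0) = if i == 0%N then 1 else 0.
  move=> Hi; rewrite HYdef mul3E !mxE -E0 -E1 -E2.
  by have := mxentry _ _ i 0 HG; rewrite id3E' // mul3E !mxE.
have Y00 := Ycol 0%N erefl; have Y10 := Ycol 1%N erefl; have Y20 := Ycol 2%N erefl.
rewrite /= in Y00 Y10 Y20.
have H00 : Y (inord 0) (inord 0) ^+ 2 + Y (inord 0) (inord 1) ^+ 2 + Y (inord 0) (inord 2) ^+ 2 = 1.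
  by have := mxentry _ _ 0 0 HY'; rewrite id3E' // mul3E !mxE /= => H; lra.
rewrite Y00 in H00.
have Y01 : Y (inord 0) (inord 1) = 0 by apply: (@sq0_eq0 _ (Y (inord 0) (inord 2))); lra.
have Y02 : Y (inord 0) (inord 2) = 0 by apply: (@sq0_eq0 _ (Y (inord 0) (inord 1))); lra.
have H11 : Y (inord 0) (inord 1) ^+ 2 + Y (inord 1) (inord 1) ^+ 2 + Y (inord 2) (inord 1) ^+ 2 = 1.
  by have := mxentry _ _ 1 1 HY; rewrite id3E' // mul3E !mxE /= => H; lra.
have H12 : Y (inord 0) (inord 1) * Y (inord 0) (inord 2) + Y (inord 1) (inord 1) * Y (inord 1) (inord 2)
   + Y (inord 2) (inord 1) * Y (inord 2) (inord 2) = 0.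
  by have := mxentry _ _ 1 2 HY; rewrite id3E' // mul3E !mxE /= => H; lra.
move: HdY; rewrite det3 Y00 Y10 Y20 Y01 Y02 => Hd.
rewrite Y01 Y02 in H11 H12.
set c := Y (inord 1) (inord 1) in H11 H12 Hd.
set s := Y (inord 2) (inord 1) in H11 H12 Hd.
set y12 := Y (inord 1) (inord 2) in H12 Hd.
set y22 := Y (inord 2) (inord 2) in H12 Hd.
have Hcs : c^+2 + s^+2 = 1 by lra.
have E12 : y12 = - s.
  have -> : y12 = c * (c * y12 + s * y22) - s * (c * y22 - s * y12) + y12 * (1 - (c^+2 + s^+2)) by ring.
  rewrite Hcs; have -> : c * y22 - s * y12 = 1 by lra.
  have -> : c * y12 + s * y22 = 0 by lra.
  ring.
have E22 : y22 = c.
  have -> : y22 = s * (c * y12 + s * y22) + c * (c * y22 - s * y12) + y22 * (1 - (c^+2 + s^+2)) by ring.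
  rewrite Hcs; have -> : c * y22 - s * y12 = 1 by lra.
  have -> : c * y12 + s * y22 = 0 by lra.
  ring.
have [w' [Hw' Gw']] := rot_quat _ _ Hcs.
exists (qmul w w'); split; first by rewrite nrm_qmul Hw Hw' mulr1.
rewrite gamma_mul // -HGdef.
have -> : gamma w' = Y.
  rewrite Gw'; apply: mx3_ext => i j Hi Hj; rewrite mxE /= !inordK //.
  case: i Hi => [|[|[|i]]] // _; case: j Hj => [|[|[|j]]] // _ /=.
  all: rewrite ?Y00 ?Y10 ?Y20 ?Y01 ?Y02 -?/c -?/s -?/y12 -?/y22 ?E12 ?E22 //.
by rewrite HYdef mulmxA HG' mul1mx.
Qed.

Lemma diag3E (d : 'rV[R]_3) i j : (i < 3)%N -> (j < 3)%N ->
  diag_mx d (inord i) (inord j) = if i == j then d 0 (inord i) else 0.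
Proof.
move=> Hi Hj; rewrite mxE -val_eqE /= !inordK //.
by case: eqP => _; rewrite ?mulr1n ?mulr0n.
Qed.

Lemma tr3E (A : 'M[R]_3) : \tr A =
  A (inord 0) (inord 0) + A (inord 1) (inord 1) + A (inord 2) (inord 2).
Proof.
rewrite /mxtrace !big_ord_recr big_ord0 /= add0r.
by congr (_ + _ + _); congr (A _ _); apply: val_inj; rewrite /= inordK.
Qed.

Lemma quad4 (w : 'cV[R]_4) (d : 'rV[R]_4) : (w^T *m diag_mx d *m w) 0 0 =
  d 0 (inord 0) * qc w 0 ^+ 2 + d 0 (inord 1) * qc w 1 ^+ 2 +
  d 0 (inord 2) * qc w 2 ^+ 2 + d 0 (inord 3) * qc w 3 ^+ 2.
Proof.
rewrite mul_mx_diag mxE sum4 !mxE /qc; ring.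
Qed.

Lemma sign_cases (e : R) : e ^+ 2 = 1 -> e = 1 \/ e = -1.
Proof.
move=> H; have : (e - 1) * (e + 1) = 0 by rewrite -subr_sqr H expr1n subrr.
move/eqP; rewrite mulf_eq0 => /orP[/eqP|/eqP] He; [left|right]; lra.
Qed.

Lemma trace_key (A U' V' : 'M[R]_3) (s : 'rV[R]_3) : is_svd A U' V' s ->
  exists (M : 'M[R]_4) (z1 z2 z3 : R), M^T *m M = 1%:M /\ z1 <= 0 /\ z2 <= 0 /\ z3 <= 0 /\
  forall q, nrm q = 1 ->
    \tr (proper_S U' V' s - A^T *m gamma q) =
    - (q^T *m M *m diagZ z1 z2 z3 *m M^T *m q) 0 0.
Proof.
move=> [HU [HV [s01 [s12 [s2 HA]]]]].
set du := \det U'; set dv := \det V'.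
have du2 : du ^+ 2 = 1.
  by have := congr1 determinant HU; rewrite det_mulmx det_tr det1 -/du expr2.
have dv2 : dv ^+ 2 = 1.
  by have := congr1 determinant HV; rewrite det_mulmx det_tr det1 -/dv expr2.
set Du : 'M[R]_3 := diag_mx (\row_(i < 3) if val i == 2%N then du else 1).
set Dv : 'M[R]_3 := diag_mx (\row_(i < 3) if val i == 2%N then dv else 1).
set U := U' *m Du; set V := V' *m Dv.
set sg := \row_(i < 3) (if val i == 2%N then \det (U' *m V') * s 0 i else s 0 i).
have DuDu : Du^T *m Du = 1%:M.
  rewrite tr_diag_mx; apply: mx3_ext => i j Hi Hj.
  rewrite mul3E !diag3E // id3E' // !mxE /= !inordK //.
  by case: i Hi => [|[|[|i]]] // _; case: j Hj => [|[|[|j]]] // _ /=;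
    rewrite ?mulr0 ?mul0r ?addr0 ?add0r ?mulr1 -?expr2.
have DvDv : Dv^T *m Dv = 1%:M.
  rewrite tr_diag_mx; apply: mx3_ext => i j Hi Hj.
  rewrite mul3E !diag3E // id3E' // !mxE /= !inordK //.
  by case: i Hi => [|[|[|i]]] // _; case: j Hj => [|[|[|j]]] // _ /=;
    rewrite ?mulr0 ?mul0r ?addr0 ?add0r ?mulr1 -?expr2.
have UU : U^T *m U = 1%:M.
  by rewrite /U trmx_mul mulmxA -(mulmxA Du^T) HU mulmx1 DuDu.
have VV : V^T *m V = 1%:M.
  by rewrite /V trmx_mul mulmxA -(mulmxA Dv^T) HV mulmx1 DvDv.
have detD (e : R) : \det (diag_mx (\row_(i < 3) if val i == 2%N then e else 1)) = e.
  rewrite det_diag !big_ord_recr big_ord0 /= !mxE /=; ring.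
have dU : \det U = 1 by rewrite /U det_mulmx detD -expr2.
have dV : \det V = 1 by rewrite /V det_mulmx detD -expr2.
have DsD : Du *m diag_mx sg *m Dv^T = diag_mx s.
  rewrite /Dv tr_diag_mx; apply: mx3_ext => i j Hi Hj.
  rewrite !mul3E !diag3E // !mxE /= !inordK //.
  case: i Hi => [|[|[|i]]] // _; case: j Hj => [|[|[|j]]] // _ /=;
    try by ring.
  rewrite det_mulmx -/du -/dv.
  transitivity (du^+2 * dv^+2 * s 0 (inord 2)); first by ring.
  by rewrite du2 dv2 !mul1r.
have HA' : A = U *m diag_mx sg *m V^T.
  have -> : U *m diag_mx sg *m V^T = U' *m (Du *m diag_mx sg *m Dv^T) *m V'^T.
    by rewrite /U /V trmx_mul !mulmxA.
  by rewrite DsD.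
clearbody U V.
have [u [Hu Gu]] := gamma_surj _ UU dU.
have [v [Hv Gv]] := gamma_surj _ VV dV.
set sg0 := sg 0 (inord 0); set sg1 := sg 0 (inord 1); set sg2 := sg 0 (inord 2).
have sgE0 : sg0 = s 0 (inord 0) by rewrite /sg0 /sg mxE /= inordK.
have sgE1 : sg1 = s 0 (inord 1) by rewrite /sg1 /sg mxE /= inordK.
have sgE2 : sg2 = du * dv * s 0 (inord 2) by rewrite /sg2 /sg mxE /= inordK // det_mulmx.
have e2 : (du * dv) ^+ 2 = 1 by rewrite exprMn du2 dv2 mulr1.
have sg2b : - s 0 (inord 2) <= sg2.
  rewrite sgE2; case: (sign_cases _ e2) => ->; lra.
set N := Rmat v *m Lmat (qconj u).
exists N^T, (- 2 * (sg1 + sg2)), (- 2 * (sg0 + sg2)), (- 2 * (sg0 + sg1)).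
split.
  rewrite trmxK; apply: mulmx1C.
  rewrite /N trmx_mul mulmxA -(mulmxA _ _ (Rmat v)) RmatT Hv scale1r mulmx1.
  by rewrite LmatT nrm_qconj Hu scale1r.
split; first by lra.
split; first by lra.
split; first by lra.
move=> q Hq.
set w := qmul (qmul (qconj u) q) v.
have Hw : nrm w = 1 by rewrite /w !nrm_qmul nrm_qconj Hu Hq Hv !mulr1.
have Nq : N *m q = w by rewrite /N -mulmxA Lmat_mul Rmat_mul.
have -> : q^T *m N^T *m diagZ (- 2 * (sg1 + sg2)) (- 2 * (sg0 + sg2)) (- 2 * (sg0 + sg1)) *m N^T^T *m q
   = w^T *m diagZ (- 2 * (sg1 + sg2)) (- 2 * (sg0 + sg2)) (- 2 * (sg0 + sg1)) *m w.
  by rewrite trmxK -mulmxA -Nq -trmx_mul.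
rewrite quad4 !mxE /= !inordK //.
have -> : A^T *m gamma q = V *m (diag_mx sg *m (U^T *m gamma q)).
  by rewrite HA' !trmx_mul trmxK tr_diag_mx !mulmxA.
have -> : \tr (diag_mx sg - V *m (diag_mx sg *m (U^T *m gamma q))) =
   \tr (diag_mx sg - diag_mx sg *m gamma w).
  rewrite !raddfB /=; congr (_ - _); rewrite mxtrace_mulC -!mulmxA.
  rewrite /w !gamma_mul ?nrm_qmul ?nrm_qconj ?Hu ?Hq ?Hv ?mulr1 // gamma_conj // Gu Gv.
  by rewrite !mulmxA.
rewrite raddfB /= !tr3E !mul3E !diag3E // /= -/sg0 -/sg1 -/sg2 !gammaE //.
ring.
Qed.

End Alg.

Import numFieldTopology.Exports numFieldNormedType.Exports.
Local Open Scope classical_set_scope.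

Section Meas.
Context {R : realType}.

Definition BM m n := g_sigma_algebraType (open : set_system 'M[R^o]_(m, n)).

Lemma cont_meas m n (f : 'M[R^o]_(m, n) -> R) : continuous f ->
  measurable_fun setT (f : BM m n -> R).
Proof.
move=> cf; apply: (measurability _ (measurable_realfun.RGenOpens.measurableE R)).
move=> _ [_ [a [b ->]] <-]; rewrite setTI; apply: sub_sigma_algebra.
by move/continuousP : cf; apply; exact: interval_open.
Qed.

Lemma coord_meas m n i j :
  measurable_fun setT (fun X : BM m n => (X : 'M[R]_(m, n)) i j).
Proof. by apply: (@cont_meas m n (fun X : 'M[R^o]_(m, n) => X i j)); exact: coord_continuous. Qed.

Definition box m n (a b : 'M[rat]_(m, n)) : set 'M[R^o]_(m, n) :=
  [set X | forall i j, ratr (a i j) < X i j < ratr (b i j)].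
Arguments box {m n}.

Lemma mx_meas d (T : measurableType d) m n (h : T -> BM m n) :
  (forall i j, measurable_fun setT (fun t => (h t : 'M[R]_(m, n)) i j)) ->
  measurable_fun setT h.
Proof.
move=> hm; apply: (@measurability _ _ T (BM m n) setT h (open : set_system 'M[R^o]_(m, n)) erefl).
move=> _ [OO oO <-]; rewrite setTI.
pose F (ab : 'M[rat]_(m, n) * 'M[rat]_(m, n)) : set T :=
  if pselect (box ab.1 ab.2 `<=` OO) then h @^-1` (box ab.1 ab.2) else set0.
have -> : h @^-1` OO = \bigcup_ab F ab.
  apply/seteqP; split => [t Ot|t [ab _]]; last first.
    by rewrite /F; case: pselect => // HO; move=> /HO.
  have : nbhs (h t : 'M[R^o]_(m, n)) OO by apply: (open_nbhs_nbhs (conj oO Ot)).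
  case/nbhs_ballP => e e0 HeO.
  have Ha (i : 'I_m) (j : 'I_n) : exists q : rat, ratr q \in `](h t : 'M[R]_(m,n)) i j - e, (h t : 'M[R]_(m,n)) i j[%R.
    by apply: rat_in_itvoo; rewrite ltrBlDr ltrDl.
  have Hb (i : 'I_m) (j : 'I_n) : exists q : rat, ratr q \in `](h t : 'M[R]_(m,n)) i j, (h t : 'M[R]_(m,n)) i j + e[%R.
    by apply: rat_in_itvoo; rewrite ltrDl.
  pose a := \matrix_(i, j) projT1 (cid (Ha i j)).
  pose b := \matrix_(i, j) projT1 (cid (Hb i j)).
  exists (a, b) => //.
  have boxO : box a b `<=` OO.
    move=> X HX; apply: HeO; split => // i j.
    have := HX i j; rewrite /a /b !mxE.
    case: (cid (Ha i j)) => qa /=; rewrite in_itv /= => /andP[qa1 qa2].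
    case: (cid (Hb i j)) => qb /=; rewrite in_itv /= => /andP[qb1 qb2].
    move=> /andP[X1 X2]; rewrite /ball /= ltr_norml; apply/andP; split; lra.
  rewrite /F; case: pselect => // _ i j; rewrite /a /b !mxE.
  case: (cid (Ha i j)) => qa /=; rewrite in_itv /= => /andP[qa1 qa2].
  case: (cid (Hb i j)) => qb /=; rewrite in_itv /= => /andP[qb1 qb2].
  by rewrite qa2 qb1.
apply: countable_bigcupT_measurable; first exact: countableP.
move=> [a b]; rewrite /F; case: pselect => _ //=.
have -> : h @^-1` box a b = \bigcap_(k in [set: 'I_m * 'I_n])
    (setT `&` (fun t => (h t : 'M[R]_(m, n)) k.1 k.2) @^-1` `](ratr (a k.1 k.2)), (ratr (b k.1 k.2))[).
  apply/seteqP; split => [t Ht [i j] _|t Ht i j].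
    by split => //=; rewrite in_itv /=; exact: Ht.
  by have [_ /=] := Ht (i, j) I; rewrite in_itv.
apply: fin_bigcap_measurable; first exact: finite_finset.
by move=> [i j] _; apply: hm => //; exact: measurable_itv.
Qed.

Definition MM d (T : measurableType d) a b (f : T -> 'M[R]_(a, b)) :=
  forall i j, measurable_fun setT (fun t => f t i j).
Arguments MM {d T a b}.

Lemma MM_meas d (T : measurableType d) a b (f : T -> 'M[R]_(a, b)) :
  MM f -> measurable_fun setT (f : T -> BM a b).
Proof. by move=> Hf; apply: mx_meas. Qed.

Lemma MM_id a b : MM (fun X : BM a b => (X : 'M[R]_(a, b))).
Proof. move=> i j; exact: coord_meas. Qed.

Lemma MM_cst d (T : measurableType d) a b (C : 'M[R]_(a, b)) : MM (fun _ : T => C).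
Proof. by move=> i j; exact: measurable_cst. Qed.

Lemma MM_comp d d' (T : measurableType d) (T' : measurableType d') a b
  (f : T' -> 'M[R]_(a, b)) (g : T -> T') :
  MM f -> measurable_fun setT g -> MM (fun t => f (g t)).
Proof. by move=> Hf Hg i j; apply: measurableT_comp (Hf i j) Hg. Qed.

Lemma MM_add d (T : measurableType d) a b (f g : T -> 'M[R]_(a, b)) :
  MM f -> MM g -> MM (fun t => f t + g t).
Proof.
move=> Hf Hg i j; rewrite (_ : (fun t => _) = (fun t => f t i j + g t i j)).
  exact: measurable_realfun.measurable_funD.
by apply/funext => t; rewrite mxE.
Qed.

Lemma MM_opp d (T : measurableType d) a b (f : T -> 'M[R]_(a, b)) :
  MM f -> MM (fun t => - f t).
Proof.
move=> Hf i j; rewrite (_ : (fun t => _) = (fun t => - f t i j)).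
  exact: measurable_realfun.measurable_funN.
by apply/funext => t; rewrite mxE.
Qed.

Lemma MM_tr d (T : measurableType d) a b (f : T -> 'M[R]_(a, b)) :
  MM f -> MM (fun t => (f t)^T).
Proof.
move=> Hf i j; rewrite (_ : (fun t => _) = (fun t => f t j i)); first exact: Hf.
by apply/funext => t; rewrite mxE.
Qed.

Lemma MM_mul d (T : measurableType d) a b c (f : T -> 'M[R]_(a, b)) (g : T -> 'M[R]_(b, c)) :
  MM f -> MM g -> MM (fun t => f t *m g t).
Proof.
move=> Hf Hg i j; rewrite (_ : (fun t => _) = (fun t => \sum_k f t i k * g t k j)).
  by apply: measurable_sum => k; apply: measurable_realfun.measurable_funM.
by apply/funext => t; rewrite mxE.
Qed.

Lemma MM_trace d (T : measurableType d) a (f : T -> 'M[R]_a) :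
  MM f -> measurable_fun setT (fun t => \tr (f t)).
Proof. by move=> Hf; apply: measurable_sum => k. Qed.

Lemma mqc k : measurable_fun setT (fun q : BM 4 1 => qc (q : 'M[R]_(4,1)) k).
Proof. exact: coord_meas. Qed.

Ltac mpoly := repeat first
  [ exact: measurable_cst
  | exact: mqc
  | apply: measurable_realfun.measurable_funX
  | apply: measurable_realfun.measurable_funD
  | apply: measurable_realfun.measurable_funB
  | apply: measurable_realfun.measurable_funM
  | apply: measurable_realfun.measurable_funN ].

Lemma MM_gamma : MM (fun q : BM 4 1 => gamma (q : 'M[R]_(4,1))).
Proof.
move=> i j; rewrite -(inord_val i) -(inord_val j).
case: i => -[|[|[|i]]] Hi //=; case: j => -[|[|[|j]]] Hj //=;
  (under eq_fun do rewrite gammaE //=); mpoly.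
Qed.

Lemma minv : measurable_fun setT (@GRing.inv R).
Proof.
have m0 : measurable [set (0 : R)] by exact: measurable_set1.
have -> : (setT : set R) = [set (0 : R)] `|` ~` [set 0] by rewrite setUv.
apply/measurable_funU => //; first exact: measurableC.
split; first exact: measurable_fun_set1.
apply: measurable_realfun.open_continuous_measurable_fun.
  apply: closed_openC; apply: accessible_closed_set1.
  exact/hausdorff_accessible/Rhausdorff.
move=> x; rewrite inE /= => x0; apply: inv_continuous; exact/eqP.
Qed.

Lemma msqrt : measurable_fun setT (@Num.sqrt R).
Proof. apply: measurable_realfun.continuous_measurable_fun; exact: sqrt_continuous. Qed.

Lemma lap_meas : measurable_fun setT (@lap_kernel R).
Proof.
rewrite /lap_kernel; apply: measurable_realfun.measurable_funM.
  apply: measurableT_comp; first exact: measurable_realfun.measurable_expR.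
  by apply: measurable_realfun.measurable_funN; exact: msqrt.
by apply: measurableT_comp; [exact: minv | exact: msqrt].
Qed.

Lemma RL_meas (A S : 'M[R]_3) :
  measurable_fun setT (fun X : BM 3 3 => RL_dens A S (X : 'M[R]_3)).
Proof.
rewrite /RL_dens; apply: measurableT_comp; first exact: lap_meas.
apply: MM_trace; apply: MM_add; first exact: MM_cst.
by apply: MM_opp; apply: MM_mul; [exact: MM_cst | exact: MM_id].
Qed.

Lemma QL_meas (M Z : 'M[R]_4) :
  measurable_fun setT (fun q : BM 4 1 => QL_dens M Z (q : 'M[R]_(4,1))).
Proof.
rewrite /QL_dens; apply: measurableT_comp; first exact: lap_meas.
apply: measurable_realfun.measurable_funN.
apply: MM_mul; last exact: MM_id.
apply: MM_mul; last exact: MM_cst.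
apply: MM_mul; last exact: MM_cst.
apply: MM_mul; last exact: MM_cst.
by apply: MM_tr; exact: MM_id.
Qed.

Lemma meas_eqc d (T : measurableType d) (f : T -> R) c :
  measurable_fun setT f -> measurable [set t | f t = c].
Proof.
move=> mf; have := mf measurableT [set c] (measurable_set1 c).
by rewrite setTI.
Qed.

Lemma S3_meas : measurable (S3 R : set (BM 4 1)).
Proof.
rewrite /S3; apply: (@meas_eqc _ _ (fun q : BM 4 1 => \sum_(i < 4) (q : 'M[R]_(4,1)) i 0 ^+ 2)).
apply: measurable_sum => k; apply: measurable_realfun.measurable_funX; exact: coord_meas.
Qed.

Lemma SO3_meas : measurable (SO3 R : set (BM 3 3)).
Proof.
have -> : (SO3 R : set (BM 3 3)) =
  (\bigcap_(k in [set: 'I_3 * 'I_3])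
     [set X : BM 3 3 | ((X : 'M[R]_3)^T *m (X : 'M[R]_3)) k.1 k.2 = (1%:M : 'M[R]_3) k.1 k.2])
  `&` [set X : BM 3 3 | \det (X : 'M[R]_3) = 1].
  apply/seteqP; split => [X [H1 H2]|X [H1 H2]]; split => //.
    by move=> k _ /=; rewrite H1.
  by apply/matrixP => i j; exact: (H1 (i, j) I).
apply: measurableI.
  apply: fin_bigcap_measurable; first exact: finite_finset.
  move=> [i j] _; apply: (@meas_eqc _ _ (fun X : BM 3 3 => ((X : 'M[R]_3)^T *m (X : 'M[R]_3)) i j)).
  by apply: MM_mul; [apply: MM_tr|]; exact: MM_id.
apply: (@meas_eqc _ _ (fun X : BM 3 3 => \det (X : 'M[R]_3))).
under eq_fun do rewrite det3.
repeat first [ exact: coord_meas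
  | apply: measurable_realfun.measurable_funD
  | apply: measurable_realfun.measurable_funB
  | apply: measurable_realfun.measurable_funN
  | apply: measurable_realfun.measurable_funM ].
Qed.

End Meas.
Arguments BM : clear implicits.
Lemma sfin_of_prob (R : realType) d (T : measurableType d) (mu : {measure set T -> \bar R}) :
  (mu setT = 1)%E -> sigma_finite setT mu.
Proof.
move=> H; apply: fin_num_fun_sigma_finite; first by rewrite measure0.
move=> A mA; rewrite ge0_fin_numE //; apply: (@le_lt_trans _ _ (mu setT)).
  by apply: le_measure => //; rewrite inE.
by rewrite H ltey.
Qed.
Section SF.
Context (R : realType) d (T : measurableType d) (mu : {measure set T -> \bar R}) (H : (mu setT = 1)%E).
Definition muc of (mu setT = 1)%E : set T -> \bar R := mu.
HB.instance Definition _ := Measure.on (muc H).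
HB.instance Definition _ := Measure_isSigmaFinite.Build _ _ _ (muc H) (@sfin_of_prob R d T mu H).
End SF.

Section Push.
Variable R : realType.
Local Open Scope ereal_scope.

Lemma prob_S d (T : measurableType d) (mu : {measure set T -> \bar R}) (S : set T) :
  measurable S -> mu setT = 1 -> mu (~` S) = 0 -> mu S = 1.
Proof.
move=> mS H1 H0.
have : mu (S `|` ~` S) = mu S + mu (~` S).
  by apply: measureU => //; [exact: measurableC | rewrite setICr].
by rewrite setUv H1 H0 adde0 => <-.
Qed.

Lemma integral_ae_const d (T : measurableType d) (mu : {measure set T -> \bar R})
  (S : set T) (f : T -> \bar R) (c : \bar R) :
  measurable S -> mu setT = 1 -> mu (~` S) = 0 ->
  measurable_fun setT f -> (forall x, 0 <= f x) ->
  (forall x, S x -> f x = c) -> \int[mu]_x f x = c.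
Proof.
move=> mS H1 H0 mf f0 fc.
rewrite (ge0_negligible_integral _ (N := ~` S)) //; last exact: measurableC.
have -> : [set: T] `\` ~` S = S by rewrite setDE setCK setTI.
rewrite (eq_integral (fun _ => c)); last by move=> x; rewrite inE => /fc.
by rewrite integral_cst // (@prob_S _ _ mu S mS H1 H0) mule1.
Qed.

Lemma integral_ae_eq d (T : measurableType d) (mu : {measure set T -> \bar R})
  (S : set T) (f g : T -> \bar R) :
  measurable S -> mu (~` S) = 0 ->
  measurable_fun setT f -> (forall x, 0 <= f x) ->
  measurable_fun setT g -> (forall x, 0 <= g x) ->
  (forall x, S x -> f x = g x) -> \int[mu]_x f x = \int[mu]_x g x.
Proof.
move=> mS H0 mf f0 mg g0 fg.
rewrite (ge0_negligible_integral _ (N := ~` S)) //; last exact: measurableC.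
rewrite [RHS](ge0_negligible_integral _ (N := ~` S)) //; last exact: measurableC.
by apply: eq_integral => x; rewrite inE => -[_ /= /contrapT /fg].
Qed.

Lemma indic_ge0 (T : Type) (A : set T) (x : T) : (0 <= (\1_A x : R))%R.
Proof. by rewrite /indic ler0n. Qed.

Lemma fubini_prob d1 d2 (T1 : measurableType d1) (T2 : measurableType d2)
  (m1 : {measure set T1 -> \bar R}) (m2 : {measure set T2 -> \bar R})
  (f : T1 * T2 -> \bar R) :
  m1 setT = 1 -> m2 setT = 1 -> measurable_fun setT f -> (forall z, 0 <= f z) ->
  [/\ measurable_fun setT (fun x => \int[m2]_y f (x, y)),
      measurable_fun setT (fun y => \int[m1]_x f (x, y)) &
      \int[m1]_x \int[m2]_y f (x, y) = \int[m2]_y \int[m1]_x f (x, y)].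
Proof.
move=> H1 H2 mf f0.
split.
- exact: (measurable_fun_fubini_tonelli_F (m2 := @muc R _ _ m2 H2) f mf f0).
- exact: (measurable_fun_fubini_tonelli_G (m1 := @muc R _ _ m1 H1) f mf f0).
- exact: (fubini_tonelli (m1 := @muc R _ _ m1 H1) (m2 := @muc R _ _ m2 H2) f mf f0).
Qed.

Lemma push_eq (nu : {measure set (Mat3 R) -> \bar R})
  (sg : {measure set (Vec4 R) -> \bar R}) :
  haar_SO3 nu -> surface_S3 sg -> forall B, measurable B ->
  nu B = sg ((fun q : Vec4 R => (gamma q : Mat3 R)) @^-1` B).
Proof.
move=> [nu1 [nuC nuinv]] [sg1 [sgC sginv]] B mB.
set phi := fun q : Vec4 R => (gamma q : Mat3 R).
have mphi : measurable_fun setT phi by apply: MM_meas; exact: MM_gamma.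
pose mulf := fun z : Vec4 R * Mat3 R => (gamma z.1 *m z.2 : Mat3 R).
have mmul : measurable_fun setT mulf.
  apply: (@MM_meas R _ _ 3 3 mulf); rewrite /mulf; apply: MM_mul.
    apply: (@MM_comp R _ _ _ _ 3 3 (fun q : BM R 4 1 => gamma (q : 'M[R]_(4,1))) fst).
      exact: MM_gamma.
    exact: measurable_fst.
  apply: (@MM_comp R _ _ _ _ 3 3 (fun X : BM R 3 3 => (X : 'M[R]_3)) snd).
    exact: MM_id.
  exact: measurable_snd.
pose k := fun z => ((\1_B (mulf z)) : R)%:E.
have mk : measurable_fun setT k.
  apply/measurable_EFinP; apply: measurableT_comp mmul.
  exact: measurable_indic.
have k0 z : 0 <= k z by rewrite lee_fin indic_ge0.
have [mF mG FT] := fubini_prob _ _ _ _ sg nu k sg1 nu1 mk k0.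
have HLS : \int[sg]_p \int[nu]_X k (p, X) = nu B.
  apply: (@integral_ae_const _ _ _ (S3 R)) => //.
  - exact: S3_meas.
  - by move=> p; apply: integral_ge0 => X _.
  move=> p Sp.
  have mpre : measurable ((fun X : Mat3 R => (gamma p *m X : Mat3 R)) @^-1` B).
    have mL : measurable_fun setT (fun X : Mat3 R => (gamma p *m X : Mat3 R)).
      apply: MM_meas; apply: MM_mul; first exact: MM_cst.
      exact: MM_id.
    by rewrite -[Z in measurable Z]setTI; apply: mL.
  transitivity (\int[nu]_X (\1_((fun X : Mat3 R => (gamma p *m X : Mat3 R)) @^-1` B) X : R)%:E).
    by [].
  rewrite integral_indic // setIT.
  apply: nuinv => //; split; [exact: gammaTgamma | exact: det_gamma].
have HRS : \int[nu]_X \int[sg]_p k (p, X) = sg (phi @^-1` B).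
  apply: (@integral_ae_const _ _ _ (SO3 R)) => //.
  - exact: SO3_meas.
  - by move=> X; apply: integral_ge0 => p _.
  move=> X [HX1 HX2].
  have [r [Hr Gr]] := gamma_surj _ HX1 HX2.
  have mRr : measurable_fun setT (fun p : Vec4 R => (Rmat r *m p : Vec4 R)).
    apply: MM_meas; apply: MM_mul; first exact: MM_cst.
    exact: MM_id.
  have mpre : measurable ((fun p : Vec4 R => (Rmat r *m p : Vec4 R)) @^-1` (phi @^-1` B)).
    rewrite -[Z in measurable Z]setTI; apply: mRr => //.
    by rewrite -[Z in measurable Z]setTI; apply: mphi.
  transitivity (\int[sg]_p (\1_((fun p : Vec4 R => (Rmat r *m p : Vec4 R)) @^-1` (phi @^-1` B)) p : R)%:E).
    apply: (@integral_ae_eq _ _ _ (S3 R)) => //.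
    - exact: S3_meas.
    - exact: (measurable_fun_pair1 X mk).
    - apply/measurable_EFinP; exact: measurable_indic.
    by move=> p Sp; rewrite /k /mulf /= -Gr -gamma_mul // -Rmat_mul.
  rewrite integral_indic // setIT.
  apply: sginv; first by rewrite /orthogonal4 RmatT Hr scale1r.
  by rewrite -[Z in measurable Z]setTI; apply: mphi.
by move: FT; rewrite HLS HRS.
Qed.

End Push.
Theorem proposition4 (R : realType)
  (nu : {measure set (Mat3 R) -> \bar R})
  (sg : {measure set (Vec4 R) -> \bar R})
  (A U' V' : 'M[R]_3) (s : 'rV[R]_3) :
  haar_SO3 nu -> surface_S3 sg ->
  is_svd A U' V' s ->
  let F := (\int[nu]_(X in SO3 R) (RL_dens A (proper_S U' V' s) X)%:E)%E in
  (0 < F < +oo)%E ->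
  exists (M : 'M[R]_4) (z1 z2 z3 : R),
    orthogonal4 M /\ z1 <= 0 /\ z2 <= 0 /\ z3 <= 0 /\
    let G := (\int[sg]_(q in S3 R) (QL_dens M (diagZ z1 z2 z3) q)%:E)%E in
    (0 < G < +oo)%E /\
    forall B : set (Mat3 R), measurable B ->
      ((\int[nu]_(X in B `&` SO3 R) (RL_dens A (proper_S U' V' s) X)%:E)
         * ((fine F)^-1)%:E)%E =
      ((\int[sg]_(q in S3 R `&` (fun q : Vec4 R => (gamma q : Mat3 R)) @^-1` B)
           (QL_dens M (diagZ z1 z2 z3) q)%:E)
         * ((fine G)^-1)%:E)%E.
Proof.
move=> Hnu Hsg Hsvd F HF.
have [M [z1 [z2 [z3 [HM [hz1 [hz2 [hz3 Hkey]]]]]]]] := trace_key _ _ _ _ Hsvd.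
exists M, z1, z2, z3.
split; first exact: HM.
do 3 (split; first done).
move=> G.
have [nu1 [nuC _]] := Hnu.
have [sg1 [sgC _]] := Hsg.
set phi := fun q : Vec4 R => (gamma q : Mat3 R).
have mphi : measurable_fun setT phi by apply: MM_meas; exact: MM_gamma.
pose f := fun X : Mat3 R => (RL_dens A (proper_S U' V' s) X)%:E.
have mf : measurable_fun setT f by apply/measurable_EFinP; exact: RL_meas.
have f0 X : (0 <= f X)%E.
  rewrite /f lee_fin /RL_dens /lap_kernel; apply: divr_ge0; last exact: sqrtr_ge0.
  exact: expR_ge0.
have KEY B : measurable B ->
  (\int[nu]_(X in B `&` SO3 R) (RL_dens A (proper_S U' V' s) X)%:E)%E =
  (\int[sg]_(q in S3 R `&` phi @^-1` B) (QL_dens M (diagZ z1 z2 z3) q)%:E)%E.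
  move=> mB.
  have mSO3 : measurable (~` SO3 R) by apply: measurableC; exact: SO3_meas.
  have mS3 : measurable (~` S3 R) by apply: measurableC; exact: S3_meas.
  transitivity (\int[nu]_(X in B) f X)%E.
    rewrite [RHS](ge0_negligible_integral _ (N := ~` SO3 R)) //;
      try (by move=> X _; exact: f0); try (exact: measurable_funTS mf).
    by rewrite setDE setCK.
  transitivity (\int[pushforward sg phi]_(X in B) f X)%E.
    apply: eq_measure_integral => C mC _.
    by rewrite /pushforward (push_eq _ _ _ Hnu Hsg _ mC).
  rewrite ge0_integral_pushforward //;
    try (by move=> X _; exact: f0); try (exact: measurable_funTS mf).
  have mpB : measurable (phi @^-1` B).
    by rewrite -[Z in measurable Z]setTI; apply: mphi.
  rewrite (ge0_negligible_integral _ (N := ~` S3 R)) //;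
    try (by move=> X _; exact: f0);
    try (by apply: measurable_funTS; exact: measurableT_comp mf mphi).
  have -> : phi @^-1` B `\` ~` S3 R = S3 R `&` phi @^-1` B by rewrite setDE setCK setIC.
  apply: eq_integral => q; rewrite inE => -[Sq _].
  by rewrite /f /= /RL_dens /QL_dens Hkey.
have GF : G = F.
  have := KEY setT measurableT; rewrite setTI preimage_setT setIT => H.
  by rewrite /G /F H.
split; first by rewrite GF.
by move=> B mB; rewrite KEY // GF.
Qed.
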